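(* Let $p,q\ge0$ with $p+q<1$, $0<\theta<1$, and $k<n$ positive integers. Define \[ m_{\mathrm{COMP}}=\min_{\alpha,d}\max\left\{\frac{\theta}{1-\theta}\frac{1}{d\,D_{\mathrm{KL}}(\alpha\|q)},\ \frac{1}{1-\theta}\frac{1}{d\,D_{\mathrm{KL}}\big(\alpha\|e^{-d}(1-p)+(1-e^{-d})q\big)}\right\}k\log(n/k) \] and \[ m^{\mathrm{Ber}}_{\mathrm{COMP}}=\min_{\alpha,d}\max\left\{\frac{\theta}{1-\theta}\frac{1}{k\,D_{\mathrm{KL}}(\alpha d/k\,\|\,qd/k)},\ \frac{1}{1-\theta}\frac{1}{k\,D_{\mathrm{KL}}\big(\alpha d/k\,\|\,(e^{-d}(1-p)+(1-e^{-d})q)d/k\big)}\right\}k\log(n/k), \] both minima over $d\in(0,\infty)$ and $\alpha\in\big(q,\ e^{-d}(1-p)+(1-e^{-d})q\big)$ (with $d<k$). Then $m^{\mathrm{Ber}}_{\mathrm{COMP}}\ge m_{\mathrm{COMP}}$.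
   Context: $\log$ is the natural logarithm; $D_{\mathrm{KL}}(r\|s)=r\log(r/s)+(1-r)\log\frac{1-r}{1-s}$, extended by continuity at $r$ or $s\in\{0,1\}$. (These are the sufficient numbers of tests for noisy COMP under the constant-column design and under the Bernoulli design, respectively, in the noisy group testing model with false-positive probability $p$ and false-negative probability $q$.) *)

(* Defs.v *)
From HB Require Import structures.
From mathcomp Require Import all_boot all_order all_algebra.
From mathcomp Require Import all_classical all_reals all_analysis.
Set Implicit Arguments. Unset Strict Implicit. Unset Printing Implicit Defensive.
Import Order.TTheory GRing.Theory Num.Theory.
Local Open Scope classical_set_scope.
Local Open Scope ring_scope.

Section Defs.
Variable R : realType.

(* x log(x/y), extended by continuity: 0 if x = 0, +oo if x > 0 = y. *)
Definition xlogxy (x y : R) : \bar R :=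
  if x == 0 then 0%E else if y == 0 then +oo%E else (x * ln (x / y))%:E.

Definition DKL (r s : R) : \bar R := (xlogxy r s + xlogxy (1 - r) (1 - s))%E.

(* Reciprocal with the convention 1/(+oo) = 0 (and 1/(-oo) = 0, never used). *)
Definition recipE (x : \bar R) : R :=
  match x with EFin r => r^-1 | _ => 0 end.

Definition beta (p q d : R) : R := expR (- d) * (1 - p) + (1 - expR (- d)) * q.

Definition m_COMP (p q theta : R) (k n : nat) : R :=
  inf [set x : R | exists alpha d : R, 0 < d /\ q < alpha /\ alpha < beta p q d /\
        x = Num.max (theta / (1 - theta) * recipE (d%:E * DKL alpha q)%E)
                    (1 / (1 - theta) * recipE (d%:E * DKL alpha (beta p q d))%E)]
  * (k%:R * ln (n%:R / k%:R)).

Definition m_COMP_Ber (p q theta : R) (k n : nat) : R :=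
  inf [set x : R | exists alpha d : R, 0 < d /\ d < k%:R /\ q < alpha /\ alpha < beta p q d /\
        x = Num.max (theta / (1 - theta)
                       * recipE (k%:R%:E * DKL (alpha * d / k%:R) (q * d / k%:R))%E)
                    (1 / (1 - theta)
                       * recipE (k%:R%:E * DKL (alpha * d / k%:R) (beta p q d * d / k%:R))%E)]
  * (k%:R * ln (n%:R / k%:R)).

End Defs.

(* Main.v *)
Require Import Defs.
From mathcomp Require Import all_boot all_order all_algebra.
From mathcomp Require Import all_classical all_reals all_analysis.
From mathcomp Require Import ring lra.
Import Order.TTheory GRing.Theory Num.Theory.
Set Implicit Arguments. Unset Strict Implicit. Unset Printing Implicit Defensive.
Local Open Scope ring_scope.

Section H.
Variable R : realType.
Implicit Types x y z a b r : R.

Lemma ln_le z : 0 < z -> ln z <= z - 1.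
Proof.
move=> z0; have := expR_ge1Dx (ln z); rewrite lnK ?posrE //; lra.
Qed.

Lemma ln_lt z : 0 < z -> z != 1 -> ln z < z - 1.
Proof.
move=> z0 z1; have : ln z != 0 by rewrite ln_eq0.
move=> /expR_gt1Dx; rewrite lnK ?posrE //; lra.
Qed.

Definition Dr x y := x * ln (x / y) + (1 - x) * ln ((1 - x) / (1 - y)).

Lemma Dr_gt0 x y : 0 < x < 1 -> 0 < y < 1 -> x != y -> 0 < Dr x y.
Proof.
move=> /andP[x0 x1] /andP[y0 y1] xy.
have h1 : ln (y / x) < y / x - 1.
  apply: ln_lt; first exact: divr_gt0.
  apply: contra xy => /eqP e; apply/eqP.
  by have := f_equal (fun t => t * x) e; rewrite mul1r divfK ?gt_eqF // => ->.
have h2 : ln ((1-y) / (1-x)) <= (1-y) / (1-x) - 1 by apply: ln_le; apply: divr_gt0; lra.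
have e1 : ln (x / y) = - ln (y / x) by rewrite -lnV ?posrE ?divr_gt0 // invf_div.
have e2 : ln ((1-x) / (1-y)) = - ln ((1-y) / (1-x)) by rewrite -lnV ?posrE ?divr_gt0 ?subr_gt0 // invf_div.
rewrite /Dr e1 e2.
have k1 : x * (y / x - 1) = y - x by field; rewrite gt_eqF.
have k2 : (1-x) * ((1-y) / (1-x) - 1) = x - y by field; rewrite subr_eq0 eq_sym lt_eqF.
have m1 : x * ln (y/x) < x * (y/x - 1) by rewrite ltr_pM2l.
have m2 : (1-x) * ln ((1-y)/(1-x)) <= (1-x) * ((1-y)/(1-x) - 1) by rewrite ler_pM2l ?subr_gt0.
rewrite k1 in m1; rewrite k2 in m2; lra.
Qed.

Lemma logsum x1 y1 x2 : 0 < x1 -> 0 < y1 -> 0 < x2 ->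
  (x1 + x2) * ln ((x1 + x2) / (y1 + x2)) <= x1 * ln (x1 / y1).
Proof.
move=> p1 q1 p2.
set X := x1 + x2; set Y := y1 + x2.
have pX : 0 < X by rewrite /X addr_gt0.
have pY : 0 < Y by rewrite /Y addr_gt0.
have h1 := ln_le (divr_gt0 (mulr_gt0 q1 pX) (mulr_gt0 p1 pY)).
have h2 := ln_le (divr_gt0 pX pY).
have E1 : ln (y1 * X / (x1 * Y)) = ln y1 + ln X - (ln x1 + ln Y).
  by rewrite ln_div ?posrE ?mulr_gt0 // !lnM ?posrE.
rewrite E1 in h1.
rewrite !ln_div ?posrE // in h2 *.
have m1 : x1 * (ln y1 + ln X - (ln x1 + ln Y)) <= x1 * (y1 * X / (x1 * Y) - 1) by rewrite ler_pM2l.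
have m2 : x2 * (ln X - ln Y) <= x2 * (X / Y - 1) by rewrite ler_pM2l.
have K : x1 * (y1 * X / (x1 * Y) - 1) + x2 * (X / Y - 1) = 0.
  rewrite /X /Y; field; rewrite ?gt_eqF // ?addr_gt0.
have KX : X = x1 + x2 by [].
rewrite KX in m1 m2 K *.
lra.
Qed.

Lemma Dr_scale r a b : 0 < r < 1 -> 0 < a < 1 -> 0 < b < 1 ->
  Dr (r * a) (r * b) <= r * Dr a b.
Proof.
move=> /andP[r0 r1] /andP[a0 a1] /andP[b0 b1].
rewrite /Dr.
have -> : r * a / (r * b) = a / b by field; rewrite ?gt_eqF.
have -> : (1 - a) / (1 - b) = (r * (1 - a)) / (r * (1 - b)) by field; rewrite ?gt_eqF ?subr_gt0.
have -> : 1 - r * a = r * (1 - a) + (1 - r) by ring.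
have -> : 1 - r * b = r * (1 - b) + (1 - r) by ring.
have := @logsum (r * (1 - a)) (r * (1 - b)) (1 - r).
rewrite !mulr_gt0 ?subr_gt0 // => /(_ isT isT r1) H.
lra.
Qed.

Lemma DKL_fin x y : 0 < x < 1 -> 0 < y < 1 -> DKL x y = (Dr x y)%:E.
Proof.
move=> /andP[x0 x1] /andP[y0 y1].
rewrite /DKL /xlogxy !gt_eqF ?subr_gt0 //.
Qed.

Lemma DKL_y0 x : 0 < x -> DKL x 0 = +oo%E.
Proof.
move=> x0; rewrite /DKL /xlogxy gt_eqF // eqxx.
by case: ifP => _; rewrite ?subr0 ?oner_eq0.
Qed.

End H.
Lemma term_le (R : realType) (k d a b : R) : 0 < d -> d < k -> 0 < a < 1 -> 0 <= b < 1 -> a != b ->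
  recipE (d%:E * DKL a b)%E <= recipE (k%:E * DKL (a * d / k) (b * d / k))%E.
Proof.
move=> d0 dk /andP[a0 a1] /andP[b0 b1] ab.
have k0 : 0 < k by apply: lt_trans dk.
have ad0 : 0 < a * d / k by rewrite divr_gt0 ?mulr_gt0.
have [->|bp] := eqVneq b 0.
  rewrite mul0r mul0r.
  rewrite (DKL_y0 a0) (DKL_y0 ad0).
  by rewrite mulry (gtr0_sg d0) mul1e mulry (gtr0_sg k0) mul1e.
have {bp} bp : 0 < b by rewrite lt_neqAle eq_sym bp.
set r := d / k.
have r0 : 0 < r by rewrite divr_gt0.
have r1 : r < 1 by rewrite ltr_pdivrMr // mul1r.
have -> : a * d / k = r * a by rewrite /r; field; rewrite gt_eqF.
have -> : b * d / k = r * b by rewrite /r; field; rewrite gt_eqF.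
have ra : 0 < r * a < 1.
  by rewrite mulr_gt0 //=; rewrite -[X in _ < X](mulr1 1) ltr_pM ?ltW.
have rb : 0 < r * b < 1.
  by rewrite mulr_gt0 //=; rewrite -[X in _ < X](mulr1 1) ltr_pM ?ltW.
have aa : 0 < a < 1 by rewrite a0 a1.
have bb : 0 < b < 1 by rewrite bp b1.
rewrite (DKL_fin aa bb) (DKL_fin ra rb) /=.
have D0 : 0 < Dr (r * a) (r * b).
  apply: Dr_gt0 => //; apply: contra ab => /eqP e; apply/eqP.
  have rn : r != 0 by rewrite gt_eqF.
  exact: (mulfI rn e).
have Hs := Dr_scale (r := r) (a := a) (b := b).
have rr : 0 < r < 1 by rewrite r0 r1.
have H := Hs rr aa bb.
have kD : k * Dr (r * a) (r * b) <= d * Dr a b.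
  have -> : d * Dr a b = k * (r * Dr a b) by rewrite /r; field; rewrite gt_eqF.
  by rewrite ler_pM2l.
have p1 : 0 < k * Dr (r * a) (r * b) by rewrite mulr_gt0.
have p2 : 0 < d * Dr a b by apply: lt_le_trans kD.
by rewrite lef_pV2 ?posrE.
Qed.

Lemma recip_ge0 (R : realType) (d a b : R) : 0 < d -> 0 < a < 1 -> 0 <= b < 1 -> a != b ->
  0 <= recipE (d%:E * DKL a b)%E.
Proof.
move=> d0 /andP[a0 a1] /andP[b0 b1] ab.
have [->|bp] := eqVneq b 0.
  by rewrite (DKL_y0 a0) mulry (gtr0_sg d0) mul1e.
have {bp} bp : 0 < b by rewrite lt_neqAle eq_sym bp.
have aa : 0 < a < 1 by rewrite a0 a1.
have bb : 0 < b < 1 by rewrite bp b1.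
rewrite (DKL_fin aa bb) /= invr_ge0 ltW // mulr_gt0 //.
exact: Dr_gt0.
Qed.

Lemma beta_bounds (R : realType) (p q d : R) : 0 <= p -> 0 <= q -> p + q < 1 -> 0 < d ->
  q < beta p q d < 1.
Proof.
move=> p0 q0 pq d0; rewrite /beta.
have e0 := expR_gt0 (- d).
have e1 : expR (- d) < 1 by rewrite expR_lt1 oppr_lt0.
set e := expR (- d) in e0 e1 *.
have h1 : 0 < e * (1 - p - q) by apply: mulr_gt0 => //; lra.
have h2 : 0 < (1 - e) * (1 - q) by apply: mulr_gt0; lra.
have h3 : 0 <= e * p by apply: mulr_ge0; lra.
apply/andP; split; lra.
Qed.

Theorem proposition2p15 (R : realType) (p q theta : R) (k n : nat) :
  0 <= p -> 0 <= q -> p + q < 1 -> 0 < theta -> theta < 1 ->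
  (0 < k)%N -> (k < n)%N ->
  m_COMP p q theta k n <= m_COMP_Ber p q theta k n.
Proof.
move=> p0 q0 pq t0 t1 k0 kn.
rewrite /m_COMP /m_COMP_Ber.
have kR : 0 < k%:R :> R by rewrite ltr0n.
have c0 : 0 <= k%:R * ln (n%:R / k%:R) :> R.
  apply: mulr_ge0; first exact: ltW.
  apply: ln_ge0; rewrite ler_pdivlMr // mul1r ler_nat; exact: ltnW.
apply: ler_wpM2r => //.
have ct1 : 0 <= theta / (1 - theta) by apply: divr_ge0; lra.
have ct2 : 0 <= 1 / (1 - theta) by apply: divr_ge0; lra.
set S := [set x : R | _]%classic.
have lbS : has_lbound S.
  exists 0 => x [a [d [d0 [qa [ab ->]]]]].
  have [_ b1] := andP (beta_bounds p0 q0 pq d0).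
  rewrite le_max; apply/orP; left; apply: mulr_ge0 => //.
  apply: recip_ge0 => //; last by rewrite gt_eqF.
  - by rewrite (le_lt_trans q0 qa) (lt_trans ab b1).
  - by rewrite q0 (lt_trans qa (lt_trans ab b1)).
apply: lb_le_inf.
- have d0 : 0 < 1 / 2 :> R by [].
  have [qb _] := andP (beta_bounds p0 q0 pq d0).
  eexists; exists ((q + beta p q (1/2)) / 2), (1/2); split => //; split.
    apply: lt_le_trans (_ : 1 <= k%:R); first by lra.
    by rewrite ler1n.
  split; first lra. split; first lra. reflexivity.
move=> y [a [d [d0 [dk [qa [ab ->]]]]]].
have [_ b1] := andP (beta_bounds p0 q0 pq d0).
apply: le_trans (ge_inf lbS _) _.
  by exists a, d.
have a01 : 0 < a < 1 by rewrite (le_lt_trans q0 qa) (lt_trans ab b1).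
rewrite ge_max; apply/andP; split; rewrite le_max; apply/orP; [left|right];
  apply: ler_wpM2l => //; apply: term_le => //.
- by rewrite q0 (lt_trans qa (lt_trans ab b1)).
- by rewrite gt_eqF.
- by rewrite (le_trans q0 (ltW (lt_trans qa ab))) b1.
- by rewrite lt_eqF.
Qed.
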